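(* Let $G\cong A_n$ with $n\ge 5$. Then either $G\cong A_5$ or $o(G)\ge 3.55$.
   Context: For a finite group $G$, $\psi(G)=\sum_{x\in G}|x|$ where $|x|$ is the order of $x$, and $o(G)=\psi(G)/|G|$. $A_n$ is the alternating group of degree $n$. *)

(* Defs.v *)
From mathcomp Require Import all_boot all_algebra all_fingroup all_solvable.
Set Implicit Arguments. Unset Strict Implicit. Unset Printing Implicit Defensive.

Definition psi (gT : finGroupType) (G : {set gT}) : nat :=
  (\sum_(x in G) #[x]%g)%N.

Definition o_avg (gT : finGroupType) (G : {set gT}) : rat :=
  ((psi G)%:R / (#|G|)%:R)%R.

(* Main.v *)
Require Import Defs.
From mathcomp Require Import all_boot all_algebra all_fingroup all_solvable.
From mathcomp Require Import zify.
Set Implicit Arguments. Unset Strict Implicit. Unset Printing Implicit Defensive.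

Module Aux.

Local Open Scope group_scope.
Section Count.
Variable T : finType.

Lemma fibre_card m (u w : m.-tuple T) : m <= #|T|.-2 -> uniq u -> uniq w ->
  (#|[set s in 'Alt_T | n_act 'P u s == w]| * #|T|^_m = #|'Alt_T|)%N.
Proof.
move=> hm uu uw.
have tr := ntransitive_weak hm (Alt_trans T).
have du : u \in m.-dtuple(setT) by rewrite inE uu; apply/subsetP.
have dw : w \in m.-dtuple(setT) by rewrite inE uw; apply/subsetP.
have [a Aa ewa] := atransP2 tr du dw.
have -> : [set s in 'Alt_T | n_act 'P u s == w] = ('C_('Alt_T)[u | ('P * m)%act] :* a)%g.
  apply/setP => s; rewrite mem_rcoset in_setI groupMr ?groupV // in_set.
  congr (_ && _); rewrite ewa.
  apply/eqP/astab1P => h.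
    by rewrite actM; change (('P * m)%act u s) with (n_act 'P u s); rewrite h actK.
  change (n_act 'P u s) with (('P * m)%act u s).
  by rewrite -[in RHS]h -actM mulgKV.
rewrite card_rcoset mulnC.
rewrite -(card_orbit_stab ('P * m)%act ('Alt_T)%G u) (atransP tr _ du).
congr (_ * _)%N.
have -> : #|T| = #|(predT : pred T)| by apply: eq_card.
rewrite -(card_uniq_tuples m (predT : pred T)).
apply: eq_card => t; rewrite !inE all_predT /=.
by apply/esym/andb_idr => _; apply/subsetP => y; rewrite inE.
Qed.

Lemma map_belast (f : T -> T) x (v : seq T) :
  (map f (belast x v) == v) = (v == traject f (f x) (size v)).
Proof.
elim: v x => [|y v IH] x //=.
rewrite !eqseq_cons IH eq_sym.
by case: eqP => [->|].
Qed.

Lemma map_fix (f : T -> T) (P : seq T) : (map f P == P) = all (fun y => f y == y) P.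
Proof. by elim: P => [|y P IH] //=; rewrite eqseq_cons IH. Qed.

Lemma allC (x : T) (P v : seq T) : all [predC x :: P] v = (x \notin v) && ~~ has (mem P) v.
Proof.
elim: v => //= y v ->; rewrite !inE eq_sym.
by case: (x == y); case: (y \in P); case: (x \in v); case: (has _ v).
Qed.

Lemma count_traj p m (P : p.-tuple T) (x : T) : uniq (x :: P) -> (p + m <= #|T|.-2)%N ->
  (#|[set s in 'Alt_T | all (fun y => s y == y) P && uniq (P ++ traject s x m.+1)]|
     * #|T|^_(p+m) = #|'Alt_T| * (#|T| - p.+1)^_m)%N.
Proof.
move=> uxP hpm.
pose V := [set v : m.-tuple T | uniq (P ++ x :: v)].
pose u (v : m.-tuple T) := [tuple of P ++ belast x v].
pose w (v : m.-tuple T) := [tuple of P ++ v].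
have stepa : forall s : {perm T},
  (all (fun y => s y == y) P && uniq (P ++ traject s x m.+1) : nat)
   = (\sum_(v in V) (n_act 'P (u v) s == w v))%N.
  move=> s.
  have e : forall v : m.-tuple T, (n_act 'P (u v) s == w v) =
       all (fun y => s y == y) P && (val v == traject s (s x) m).
    move=> v; rewrite -val_eqE /= map_cat eqseq_cat ?size_map ?size_tuple //.
    by rewrite map_fix map_belast size_tuple.
  have hs : size (traject s (s x) m) == m by rewrite size_traject.
  pose t0 : m.-tuple T := Tuple hs.
  under eq_bigr => v _ do rewrite e.
  case: (boolP (all (fun y => s y == y) P)) => hP /=; last by rewrite big1.
  have e2 : forall v : m.-tuple T, (val v == traject s (s x) m) = (v == t0).
    by move=> v; rewrite -val_eqE.
  under eq_bigr => v _ do rewrite e2.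
  have -> : uniq (P ++ traject s x m.+1) = (t0 \in V) by rewrite inE.
  case: (boolP (t0 \in V)) => h.
    rewrite (bigD1 t0) //= eqxx big1 // => v /andP[_ /negbTE ->] //.
  rewrite big1 // => v vV; case: eqP => // ev; by rewrite -ev vV in h.
have cardE : forall (Q : pred {perm T}),
    #|[set s in 'Alt_T | Q s]| = (\sum_(s in 'Alt_T) (Q s : nat))%N.
  move=> Q; rewrite -sum1_card [RHS]big_mkcond [LHS]big_mkcond.
  by apply: eq_bigr => s _; rewrite inE; case: (s \in _); case: (Q s).
rewrite cardE.
under eq_bigr => s _ do rewrite stepa.
rewrite exchange_big /= big_distrl /=.
rewrite (eq_bigr (fun _ => #|'Alt_T|)); last first.
  move=> v vV; rewrite -cardE fibre_card //.
  - move: vV; rewrite inE lastI -rcons_cat rcons_uniq => /andP[_ //].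
  - move: vV; rewrite inE => vV; apply: (subseq_uniq _ vV).
    exact: cat_subseq (subseq_refl _) (subseq_cons v x).
rewrite sum_nat_const mulnC; congr (_ * _)%N.
have cC : #|[predC (x :: P)]| = (#|T| - p.+1)%N.
  have := cardC (mem (x :: P)); rewrite (card_uniqP uxP) /= size_tuple.
  move=> <-; rewrite addKn //.
rewrite -cC -card_uniq_tuples; apply: eq_card => v; rewrite !inE.
rewrite cat_uniq /= allC; move: uxP => /= /andP[xP ->]; rewrite (negbTE xP) /=.
by case: (x \in v); case: (has _ v).
Qed.

Lemma traj_order (s : {perm T}) x k : uniq (traject s x k.+1) -> (k < #[s])%N.
Proof.
move=> u; rewrite ltnNge; apply/negP => h.
have h0 : (0 < size (traject s x k.+1))%N by rewrite size_traject.
have hN : (#[s] < size (traject s x k.+1))%N by rewrite size_traject ltnS.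
have := nth_uniq x h0 hN u.
rewrite !nth_traject // ?ltnS // /= -permX expg_order perm1 eqxx => /esym/eqP e.
by move: (order_gt0 s); rewrite -e.
Qed.

Lemma sum_lt K N : (\sum_(k < K) (k < N : nat) = minn K N)%N.
Proof.
elim: K => [|K IH]; first by rewrite big_ord0 min0n.
rewrite big_ord_recr /= IH; case: (ltnP K N) => h /=; lia.
Qed.

Definition bnd (x0 x1 : T) (s : {perm T}) : nat :=
  (\sum_(k < 5) (all (fun y => s y == y) ([tuple] : 0.-tuple T) && uniq ([tuple] ++ traject s x0 k.+1) : nat)
  + \sum_(k < 3) (all (fun y => s y == y) [tuple x0] && uniq ([tuple x0] ++ traject s x1 k.+2) : nat))%N.

Lemma bnd_le x0 x1 s : (bnd x0 x1 s <= #[s])%N.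
Proof.
rewrite /bnd.
have e1 : forall k, (all (fun y => s y == y) ([tuple] : 0.-tuple T) && uniq ([tuple] ++ traject s x0 k.+1))
   = uniq (traject s x0 k.+1) by [].
have e2 : forall k, (all (fun y => s y == y) [tuple x0] && uniq ([tuple x0] ++ traject s x1 k.+2))
   = (s x0 == x0) && uniq (x0 :: traject s x1 k.+2) by move=> k; rewrite [all _ _]/= andbT.
under eq_bigr => k _ do rewrite e1.
under [X in (_ + X)%N]eq_bigr => k _ do rewrite e2.
case: (boolP (s x0 == x0)) => h.
  under [X in (_ + X)%N]eq_bigr => k _ do rewrite andTb.
  rewrite big_ord_recl big1; last first.
    by move=> k _; rewrite [traject _ _ _]/= (eqP h) cons_uniq inE eqxx.
  have : (\sum_(k < 3) (uniq (x0 :: traject s x1 k.+2) : nat) <= #[s].-1)%N.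
    apply: leq_trans (_ : \sum_(k < 3) (k < #[s].-1 : nat) <= _)%N; last by rewrite sum_lt geq_minr.
    apply: leq_sum => k _; case: (boolP (uniq _)) => // hu.
    move: hu; rewrite cons_uniq => /andP[_ /traj_order hk].
    by move: hk; case: #[s] => // N; rewrite ltnS => ->.
  have := order_gt0 s; rewrite [uniq [:: x0]]/=.
  move=> h1 h2; rewrite addn0 add1n; rewrite -(prednK h1) ltnS in h2 *; exact: h2.
rewrite [X in (_ + X)%N]big1 ?addn0 //.
apply: leq_trans (_ : \sum_(k < 5) (k < #[s] : nat) <= _)%N; last by rewrite sum_lt geq_minr.
by apply: leq_sum => k _; case: (boolP (uniq _)) => // /traj_order ->.
Qed.

Lemma cardAltE (Q : pred {perm T}) :
    #|[set s in 'Alt_T | Q s]| = (\sum_(s in 'Alt_T) (Q s : nat))%N.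
Proof.
rewrite -sum1_card [RHS]big_mkcond [LHS]big_mkcond.
by apply: eq_bigr => s _; rewrite inE; case: (s \in _); case: (Q s).
Qed.

Definition f1 (x0 : T) (k : nat) :=
  #|[set s in 'Alt_T | all (fun y => s y == y) ([tuple] : 0.-tuple T) && uniq ([tuple] ++ traject s x0 k.+1)]|.
Definition f2 (x0 x1 : T) (k : nat) :=
  #|[set s in 'Alt_T | all (fun y => s y == y) [tuple x0] && uniq ([tuple x0] ++ traject s x1 k.+1.+1)]|.
Arguments f1 : simpl never.
Arguments f2 : simpl never.

Lemma ffE n : (n^_1 = n /\ n^_2 = n * (n-1) /\ n^_3 = n * (n-1) * (n-2) /\
   n^_4 = n * (n-1) * (n-2) * (n-3) /\ n^_5 = n * (n-1) * (n-2) * (n-3) * (n-4))%N.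
Proof. by rewrite !ffactnSr ffactn0 mul1n subn0. Qed.

Lemma main_ineq (x0 x1 : T) : (6 <= #|T|)%N -> x0 != x1 ->
  (355 * #|'Alt_T| <= 100 * \sum_(s in 'Alt_T) #[s])%N.
Proof.
move=> hn hx.
have key : (\sum_(s in 'Alt_T) bnd x0 x1 s = \sum_(k<5) f1 x0 k + \sum_(k<3) f2 x0 x1 k)%N.
  rewrite /bnd big_split /= [X in (X + _)%N]exchange_big [X in (_ + X)%N]exchange_big /=.
  by congr (_ + _)%N; apply: eq_bigr => k _; rewrite /f1 /f2 cardAltE.
have le1 : (\sum_(s in 'Alt_T) bnd x0 x1 s <= \sum_(s in 'Alt_T) #[s])%N.
  by apply: leq_sum => s _; exact: bnd_le.
apply: leq_trans (leq_mul (leqnn 100) le1); rewrite key.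
have h1 : forall k, (k <= 4)%N -> (f1 x0 k * #|T|^_k = #|'Alt_T| * (#|T| - 1)^_k)%N.
  move=> k hk; have := @count_traj 0 k [tuple] x0 isT.
  by rewrite add0n /f1; apply; lia.
have h2 : forall k, (k <= 2)%N -> (f2 x0 x1 k * #|T|^_k.+2 = #|'Alt_T| * (#|T| - 2)^_k.+1)%N.
  move=> k hk; have := @count_traj 1 k.+1 [tuple x0] x1.
  rewrite /f2 add1n; apply; last by lia.
  by rewrite /= inE eq_sym hx.
rewrite !big_ord_recr !big_ord0 /=.
have [a1 [a2 [a3 [a4 a5]]]] := ffE #|T|.
have [b1 [b2 [b3 [b4 b5]]]] := ffE (#|T| - 1).
have [c1 [c2 [c3 [c4 c5]]]] := ffE (#|T| - 2).
have := h1 0%N isT; have := h1 1%N isT; have := h1 2%N isT; have := h1 3%N isT; have := h1 4%N isT.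
have := h2 0%N isT; have := h2 1%N isT; have := h2 2%N isT.
rewrite !ffactn0 a1 a2 a3 a4 b1 b2 b3 b4 c1 c2 c3.
move: (f1 x0 0) (f1 x0 1) (f1 x0 2) (f1 x0 3) (f1 x0 4) (f2 x0 x1 0) (f2 x0 x1 1) (f2 x0 x1 2).
clear a1 a2 a3 a4 a5 b1 b2 b3 b4 b5 c1 c2 c3 c4 c5 h1 h2 key le1.
move: #|'Alt_T| hn; move: #|T| => n A hn.
have [N ->] : exists N, n = N.+3.+3 by exists (n - 6); lia.
rewrite !subSS !subn0.
move=> q0 q1 q2 q3 q4 d0 d1 d2 E8 E7 E6 E5 E4 E3 E2 E1.
have G4 : (q4 * N.+3.+3 = A * N.+2)%N.
  apply/eqP; rewrite -(eqn_pmul2r (_ : 0 < N.+3.+2 * N.+4 * N.+3)%N) //; apply/eqP; lia.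
have G3 : (q3 * N.+3.+3 = A * N.+3)%N.
  apply/eqP; rewrite -(eqn_pmul2r (_ : 0 < N.+3.+2 * N.+4)%N) //; apply/eqP; lia.
have G2 : (q2 * N.+3.+3 = A * N.+4)%N.
  apply/eqP; rewrite -(eqn_pmul2r (_ : 0 < N.+3.+2)%N) //; apply/eqP; lia.
have H2 : (d2 * (N.+3.+3 * N.+3.+2) = A * N.+2)%N.
  apply/eqP; rewrite -(eqn_pmul2r (_ : 0 < N.+4 * N.+3)%N) //; apply/eqP; lia.
have H1 : (d1 * (N.+3.+3 * N.+3.+2) = A * N.+3)%N.
  apply/eqP; rewrite -(eqn_pmul2r (_ : 0 < N.+4)%N) //; apply/eqP; lia.
have F4 : (q4 * N.+3.+3 * N.+3.+2 = A * N.+2 * N.+3.+2)%N by rewrite G4.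
have F3 : (q3 * N.+3.+3 * N.+3.+2 = A * N.+3 * N.+3.+2)%N by rewrite G3.
have F2 : (q2 * N.+3.+3 * N.+3.+2 = A * N.+4 * N.+3.+2)%N by rewrite G2.
have F1 : (q1 * N.+3.+3 * N.+3.+2 = A * N.+3.+2 * N.+3.+2)%N by rewrite E2.
rewrite -(leq_pmul2r (_ : 0 < N.+3.+3 * N.+3.+2)%N) //.
nia.
Qed.
End Count.
End Aux.
Import GRing.Theory Num.Theory.

Lemma psi_isog (gT rT : finGroupType) (G : {group gT}) (H : {group rT}) :
  (G \isog H)%g -> psi G = psi H /\ #|G| = #|H|.
Proof.
case/isogP => f injf <-.
split; last by rewrite card_injm.
rewrite /psi morphimEdom big_imset /=; last exact/injmP.
by apply: eq_bigr => x Gx; rewrite order_injm.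
Qed.

Theorem lemma4p1 (gT : finGroupType) (G : {group gT}) (n : nat) :
  (5 <= n)%N ->
  (G \isog ('Alt_('I_n))%G)%g ->
  (G \isog ('Alt_('I_5))%G)%g \/ ((355%:R / 100%:R : rat) <= o_avg G)%R.
Proof.
move=> hn iso.
case: (ltngtP n 5) => [h5|h6|e]; [by move: hn; rewrite leqNgt h5 | | by left; rewrite -e].
right.
have [ep ec] := psi_isog iso.
have x0 : 'I_n := Ordinal (ltn_trans (isT : 0 < 5)%N h6).
have x1 : 'I_n := Ordinal (ltn_trans (isT : 1 < 5)%N h6).
have hx : (Ordinal (ltn_trans (isT : 0 < 5)%N h6) != Ordinal (ltn_trans (isT : 1 < 5)%N h6)) by [].
have hT : (6 <= #|'I_n|)%N by rewrite card_ord.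
have key := Aux.main_ineq hT hx.
have g0 : (0 < #|G|)%N by rewrite cardG_gt0.
have gR : (0 < (#|G|)%:R :> rat)%R by rewrite ltr0n.
rewrite /o_avg (ler_pdivlMr (355%:R / 100%:R) (psi G)%:R gR).
have hR : (0 < 100%:R :> rat)%R by rewrite ltr0n.
rewrite (mulrAC (355%:R : rat) (100%:R^-1) (#|G|)%:R)%R.
rewrite (ler_pdivrMr (psi G)%:R (355%:R * (#|G|)%:R) hR)%R.
rewrite -!natrM ler_nat ep ec [X in (_ <= X)%N]mulnC.
exact: key.
Qed.
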